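(* Let $S$ be the output of Algorithm 1 and let $\epsilon>0$. For each $c\in C$, \[ \Pr\left[f_c(S)\le\left(1-\frac1e-\epsilon\right)\mathrm{OPT}\right]\;\le\;\exp\left(-\frac{\epsilon^2\,\mathrm{OPT}}{4M_c}\right), \] where $M_c=\max_{v\in V} f_c(v\mid\emptyset)$ (assumed positive).
   Context: Setup: $V$ is a finite nonempty ground set, $C$ is a finite nonempty set of ''colors'', $k=|C|$. For each $c\in C$, $f_c\colon 2^V\to\mathbb{R}_{\ge 0}$ is monotone and submodular. $B$ is a positive integer (the budget). $f(T\mid S)=f(S\cup T)-f(S)$ and $f(v\mid S)=f(\{v\}\mid S)$. $\mathrm{OPT}=\max_{S\subseteq V,\,|S|\le B}\min_{c\in C} f_c(S)$. $\Delta_V$ is the probability simplex over $V$. Algorithm 1 (assumes $\mathrm{OPT}$ known): set $S^{(0)}=\emptyset$; for $i=1,\dots,B$: choose any $x^{(i)}\in\Delta_V$ (the choice may depend arbitrarily on the history) such that $\sum_{v\in V}x^{(i)}_v f_c(v\mid S^{(i-1)})\ge \frac1B(\mathrm{OPT}-f_c(S^{(i-1)}))$ for all $c\in C$ (such $x^{(i)}$ always exists); sample $v^{(i)}\sim x^{(i)}$ using fresh randomness; set $S^{(i)}=S^{(i-1)}\cup\{v^{(i)}\}$. Output $S^{(B)}$. *)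

(* Defs.v *)
From HB Require Import structures.
From mathcomp Require Import all_boot all_order all_algebra.
From mathcomp Require Import all_classical all_reals.
From mathcomp Require Import all_analysis.
Set Implicit Arguments. Unset Strict Implicit. Unset Printing Implicit Defensive.
Import Order.TTheory GRing.Theory Num.Theory.
Local Open Scope ring_scope.

Section Defs.
Variables (R : realType) (V C : finType).

Definition marg (g : {set V} -> R) (v : V) (S : {set V}) : R := g (v |: S) - g S.

Definition monotone_set (g : {set V} -> R) : Prop :=
  forall S T : {set V}, S \subset T -> g S <= g T.

Definition submodular (g : {set V} -> R) : Prop :=
  forall S T : {set V}, g (S :|: T) + g (S :&: T) <= g S + g T.

Definition nonneg_set (g : {set V} -> R) : Prop := forall S, 0 <= g S.

(* min_{c in C} f_c(S); c0 : C only witnesses nonemptiness of C (the value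
   does not depend on it). *)
Definition minf (f : C -> {set V} -> R) (c0 : C) (S : {set V}) : R :=
  \big[Num.min/f c0 S]_(c : C) f c S.

(* OPT = max_{|S| <= B} min_c f_c(S)  (the empty set is feasible). *)
Definition OPT (f : C -> {set V} -> R) (c0 : C) (B : nat) : R :=
  \big[Num.max/minf f c0 finset.set0]_(S : {set V} | (#|S| <= B)%N) minf f c0 S.

(* (0 as the neutral element is harmless: g monotone gives marginals >= 0) *)
Definition Mc (g : {set V} -> R) : R :=
  \big[Num.max/0]_(v : V) marg g v finset.set0.

(* A run of Algorithm 1 is described by its (adaptive) choice rule:
   x h is the distribution x^(i) chosen after history h = [v^(1);...;v^(i-1)],
   so S^(i-1) = [set:: h]. *)
Definition in_simplex (x : V -> R) : Prop :=
  (forall v, 0 <= x v) /\ \sum_(v : V) x v = 1.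

Definition valid_rule (f : C -> {set V} -> R) (c0 : C) (B : nat)
    (x : seq V -> V -> R) : Prop :=
  forall h : seq V, (size h < B)%N ->
    in_simplex (x h) /\
    forall c : C,
      (OPT f c0 B - f c [set:: h]) / B%:R
        <= \sum_(v : V) x h v * marg (f c) v [set:: h].

Definition run_prob (B : nat) (x : seq V -> V -> R) (t : B.-tuple V) : R :=
  \prod_(i < B) x (take i t) (tnth t i).

Definition Pr_out (B : nat) (x : seq V -> V -> R) (E : {set V} -> bool) : R :=
  \sum_(t : B.-tuple V | E [set:: t]) run_prob x t.
End Defs.

(* Main.v *)
Require Import Defs.
From HB Require Import structures.
From mathcomp Require Import all_boot all_order all_algebra.
From mathcomp Require Import all_classical all_reals.
From mathcomp Require Import all_analysis.
From mathcomp Require Import ring lra.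
Import Order.TTheory GRing.Theory Num.Theory.
Local Open Scope ring_scope.


Lemma exp_step (R : realType) (a u : R) : 0 <= a -> 0 <= u -> u <= 1 ->
  expR (- (a * u)) <= 1 - a / (1 + a) * u.
Proof.
move=> a0 u0 u1.
have h1 := expR_ge1Dx (a * u).
have pos : 0 < 1 + a * u by nra.
rewrite expRN.
apply: (@le_trans _ _ ((1 + a * u)^-1)).
  by rewrite lef_pV2 ?posrE ?expR_gt0.
rewrite -[leLHS]mul1r ler_pdivrMr //.
have -> : (1 - a / (1 + a) * u) * (1 + a * u) = 1 + a * a * u * (1 - u) / (1 + a).
  field; lra.
have : 0 <= a * a * u * (1 - u) / (1 + a).
  apply: divr_ge0; last lra.
  apply: mulr_ge0; last lra. nra.
lra.
Qed.

Fixpoint lamk (R : realType) (l : R) (B : nat) (k : nat) : R :=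
  match k with
  | 0 => l
  | k'.+1 => let a := lamk R l B k' in a - a / ((1 + a) * B%:R)
  end.
Arguments lamk {R}.

Lemma lamk_bnd (R : realType) (l : R) (B k : nat) : 0 <= l -> (0 < B)%N ->
  0 <= lamk l B k /\ lamk l B k <= l /\
  lamk l B k <= l * expR (- (k%:R / ((1 + l) * B%:R))).
Proof.
move=> l0 B0.
have Bp : 1 <= (B%:R : R) by rewrite ler1n.
elim: k => [|k [a0 [al ae]]] /=.
  by rewrite mul0r oppr0 expR0 mulr1; lra.
set a := lamk l B k in a0 al ae *.
have d1 : 0 < (1 + a) * B%:R by nra.
have d2 : 0 < (1 + l) * B%:R by nra.
have s1 : a / ((1 + a) * B%:R) <= a.
  rewrite ler_pdivrMr //; nra.
have s2 : a / ((1 + l) * B%:R) <= a / ((1 + a) * B%:R).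
  rewrite ler_pdivrMr // mulrAC ler_pdivlMr //; apply: ler_wpM2l => //; apply: ler_wpM2r; lra.
have s3 : 0 <= a / ((1 + a) * B%:R) by apply: divr_ge0; lra.
split; first lra.
split; first lra.
have e1 := expR_ge1Dx (- (1 / ((1 + l) * B%:R))).
have -> : (k.+1%:R / ((1 + l) * B%:R)) = k%:R / ((1 + l) * B%:R) + 1 / ((1 + l) * B%:R).
  by rewrite -natr1; field; lra.
rewrite opprD expRD mulrA.
apply: (@le_trans _ _ (a * expR (- (1 / ((1 + l) * B%:R))))).
  have : a - a / ((1 + l) * B%:R) <= a * expR (- (1 / ((1 + l) * B%:R))).
    have -> : a - a / ((1 + l) * B%:R) = a * (1 + - (1 / ((1 + l) * B%:R))) by field; lra.
    by apply: ler_wpM2l.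
  lra.
apply: ler_wpM2r; first exact: expR_ge0.
exact: ae.
Qed.

Lemma final_num (R : realType) (l : R) : 0 <= l -> l <= 1 ->
  expR (l - 1) - expR (-1) <= l.
Proof.
move=> l0 l1.
have e2 := expR_ge1Dx (- l).
have ee1 : expR (-1) = expR (l - 1) * expR (- l) by rewrite -expRD addrAC subrr add0r.
have e3 : expR (l - 1) <= 1 by rewrite -[X in _ <= X]expR0 ler_expR; lra.
have e4 : 0 <= expR (l - 1) := expR_ge0 _.
rewrite ee1. nra.
Qed.

Lemma sum_tupleS (R : nmodType) (V : finType) n (F : n.+1.-tuple V -> R) :
  \sum_(t : n.+1.-tuple V) F t = \sum_(v : V) \sum_(t : n.-tuple V) F [tuple of v :: t].
Proof.
rewrite pair_big /=.
rewrite (reindex (fun p : V * n.-tuple V => [tuple of p.1 :: p.2])) //=.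
exists (fun t : n.+1.-tuple V => (thead t, [tuple of behead t])).
  by move=> [v t] _ /=; rewrite theadE; congr pair; apply: val_inj.
by move=> t _ /=; rewrite [RHS]tuple_eta.
Qed.

Lemma sum_tuple0 (R : nmodType) (V : finType) (F : 0.-tuple V -> R) :
  \sum_(t : 0.-tuple V) F t = F [tuple].
Proof.
by rewrite (big_pred1 [tuple]) // => t /=; apply/esym/eqP; exact: tuple0.
Qed.

Section Main.
Variables (R : realType) (V : finType) (x : seq V -> V -> R).

Definition W (h : seq V) n (t : n.-tuple V) : R :=
  \prod_(i < n) x (h ++ take i t) (tnth t i).
Definition EV (h : seq V) n (g : seq V -> R) : R :=
  \sum_(t : n.-tuple V) W h n t * g (h ++ t).

Lemma EV0 h g : EV h 0 g = g h.
Proof. by rewrite /EV sum_tuple0 /W big_ord0 mul1r cats0. Qed.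

Lemma EVS h n g : EV h n.+1 g = \sum_(v : V) x h v * EV (rcons h v) n g.
Proof.
rewrite /EV sum_tupleS; apply: eq_bigr => v _; rewrite big_distrr.
apply: eq_bigr => t _ /=.
rewrite /W big_ord_recl /= cats0 tnth0 -mulrA cat_rcons; congr (_ * (_ * _)).
apply: eq_bigr => i _; rewrite tnthS /= add0n.
by rewrite cat_rcons.
Qed.

End Main.
Arguments EV {R V}.
Arguments W {R V}.

Lemma set_rcons (V : finType) (h : seq V) v : [set:: rcons h v] = v |: [set:: h].
Proof. by apply/setP => y; rewrite !inE mem_rcons inE. Qed.

Lemma key (R : realType) (V : finType) (x : seq V -> V -> R)
  (F : {set V} -> R) (M O l : R) (B : nat)
  (hx : forall h, (size h < B)%N -> forall v, 0 <= x h v)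
  (hs : forall h, (size h < B)%N -> \sum_v x h v = 1)
  (hr : forall h, (size h < B)%N ->
      (O - F [set:: h]) / B%:R <= \sum_v x h v * marg F v [set:: h])
  (hm : forall h v, 0 <= marg F v [set:: h] <= M)
  (M0 : 0 < M) (B0 : (0 < B)%N) (l0 : 0 <= l) :
  forall n h, (size h + n)%N = B ->
  EV x h n (fun s => expR (- (l * F [set:: s]) / M)) <=
  expR (- (lamk l B n * F [set:: h]) / M - (l - lamk l B n) * O / M).
Proof.
have Mn0 : M != 0 by rewrite gt_eqF.
have Bp : 1 <= (B%:R : R) by rewrite ler1n.
have Bn0 : (B%:R : R) != 0 by rewrite gt_eqF //; lra.
elim=> [|n IH] h hsz.
  by rewrite EV0 /= subrr !mul0r subr0.
have hB : (size h < B)%N by rewrite -hsz addnS ltnS leq_addr.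
rewrite EVS /=.
have [a0 [al _]] := @lamk_bnd R l B n l0 B0.
set a := lamk l B n in a0 al IH *.
set F0 := F [set:: h].
set A := - (a * F0) / M - (l - a) * O / M.
have step : forall v, x h v * EV x (rcons h v) n (fun s => expR (- (l * F [set:: s]) / M))
   <= expR A * (x h v * expR (- (a * (marg F v [set:: h] / M)))).
  move=> v; rewrite mulrCA; apply: ler_wpM2l; first exact: hx.
  apply: le_trans; first by apply: IH; rewrite size_rcons addSnnS.
  rewrite -expRD le_eqVlt; apply/orP; left; apply/eqP; congr expR.
  rewrite /A /marg set_rcons /F0.
  by field.
apply: le_trans; first exact: (ler_sum _ (fun v _ => step v)).
rewrite -big_distrr /=.
set k := a / (1 + a).
have k0 : 0 <= k by apply: divr_ge0; lra.
have s1 : \sum_v x h v * expR (- (a * (marg F v [set:: h] / M)))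
    <= \sum_v (x h v - k / M * (x h v * marg F v [set:: h])).
  apply: ler_sum => v _.
  have [m0 m1] := andP (hm h v).
  have u0 : 0 <= marg F v [set:: h] / M by apply: divr_ge0; lra.
  have u1 : marg F v [set:: h] / M <= 1 by rewrite ler_pdivrMr // mul1r.
  have e := @exp_step R _ _ a0 u0 u1.
  have xv := hx h hB v.
  have -> : x h v - k / M * (x h v * marg F v [set:: h]) =
            x h v * (1 - a / (1 + a) * (marg F v [set:: h] / M)).
    rewrite /k; field; apply/andP; split => //; rewrite gt_eqF //; lra.
  by apply: ler_wpM2l.
rewrite sumrB -mulr_sumr hs // in s1.
have s2 : 1 - k / M * (\sum_v x h v * marg F v [set:: h]) <= 1 - k / M * ((O - F0) / B%:R).
  rewrite lerD2l lerN2; apply: ler_wpM2l; last exact: hr.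
  by apply: divr_ge0; lra.
have s3 := expR_ge1Dx (- (k / M * ((O - F0) / B%:R))).
have s4 : \sum_v x h v * expR (- (a * (marg F v [set:: h] / M)))
   <= expR (- (k / M * ((O - F0) / B%:R))) by lra.
apply: le_trans; first exact: (ler_wpM2l (expR_ge0 _) s4).
rewrite -expRD le_eqVlt; apply/orP; left; apply/eqP; congr expR.
rewrite /A /k /F0 /=; field.
apply/and3P; split => //; rewrite gt_eqF //; lra.
Qed.

Lemma marg_bnd (R : realType) (V : finType) (F : {set V} -> R) :
  nonneg_set F -> monotone_set F -> submodular F ->
  forall S v, 0 <= marg F v S <= Mc F.
Proof.
move=> h0 hmo hsub S v.
have m0 : forall T, 0 <= marg F v T.
  move=> T; rewrite /marg subr_ge0; apply: (hmo T (v |: T)); exact: finset.subsetU1.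
apply/andP; split; first exact: m0.
have H1 : marg F v finset.set0 <= Mc F.
  rewrite /Mc. exact: (le_bigmax _ (fun w => marg F w finset.set0) v).
suff H2 : marg F v S <= marg F v finset.set0 by exact: le_trans H2 H1.
case vS : (v \in S).
  rewrite /marg; have -> : v |: S = S by apply/finset.setP => y; rewrite !inE; case: eqP => // ->.
  by rewrite subrr; apply: m0.
have := hsub [set v] S.
have -> : [set v] :&: S = finset.set0.
  by apply/finset.setP => y; rewrite !inE; case: eqP => // ->; rewrite vS.
rewrite /marg finset.setU0 => H.
lra.
Qed.

Lemma OPT_ge0 (R : realType) (V C : finType) (f : C -> {set V} -> R) c B :
  (forall c', nonneg_set (f c')) -> 0 <= OPT f c B.
Proof.
move=> h0.
have mn : forall S, 0 <= minf f c S.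
  move=> S; rewrite /minf; apply/bigmin_geP; split; first exact: h0.
  by move=> i _; apply: h0.
rewrite /OPT; apply: le_trans (bigmax_ge_id _ _ _ _).
exact: mn.
Qed.

Theorem lemma4 (R : realType) (V C : finType) (f : C -> {set V} -> R)
    (B : nat) (x : seq V -> V -> R) (eps : R) (c : C) :
  (forall c' : C, nonneg_set (f c') /\ monotone_set (f c') /\ submodular (f c')) ->
  (0 < B)%N ->
  valid_rule f c B x ->
  0 < eps ->
  0 < Mc (f c) ->
  Pr_out B x (fun S => f c S <= (1 - expR (-1) - eps) * OPT f c B)
    <= expR (- (eps ^+ 2 * OPT f c B) / (4 * Mc (f c))).
Proof.
move=> hf B0 hv eps0 M0.
have O0 : 0 <= OPT f c B by apply: OPT_ge0 => c'; case: (hf c').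
set O := OPT f c B in O0 *.
set M := Mc (f c) in M0 *.
set F := f c.
have [hF0 [hmo hsub]] := hf c.
have hm : forall h v, 0 <= marg F v [set:: h] <= M.
  by move=> h v; apply: marg_bnd.
have hx : forall h, (size h < B)%N -> forall v, 0 <= x h v.
  by move=> h hh v; case: (hv h hh) => [[]] .
have hs : forall h, (size h < B)%N -> \sum_v x h v = 1.
  by move=> h hh; case: (hv h hh) => [[]].
have hr : forall h, (size h < B)%N ->
      (O - F [set:: h]) / B%:R <= \sum_v x h v * marg F v [set:: h].
  by move=> h hh; case: (hv h hh) => _; apply.
set a0 := (1 - expR (-1) - eps) * O.
have Mn0 : M != 0 by rewrite gt_eqF.
have cher : forall l, 0 <= l -> l <= 1 ->
    Pr_out B x (fun S => F S <= a0) <= expR (l * a0 / M - (l - l * expR (l - 1)) * O / M).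
  move=> l l0 l1.
  have rp0 : forall t : B.-tuple V, 0 <= run_prob x t.
    move=> t; rewrite /run_prob; apply: prodr_ge0 => i _; apply: hx.
    by rewrite size_takel // size_tuple ltnW.
  apply: (@le_trans _ _ (\sum_(t : B.-tuple V) run_prob x t * expR (l * a0 / M + - (l * F [set:: t]) / M))).
    rewrite /Pr_out big_mkcond /=; apply: ler_sum => t _.
    case: ifP => hP; last by rewrite mulr_ge0 ?expR_ge0.
    rewrite -[leLHS]mulr1; apply: ler_wpM2l => //.
    have := expR_ge1Dx (l * a0 / M + - (l * F [set:: t]) / M).
    have : 0 <= l * a0 / M + - (l * F [set:: t]) / M.
      rewrite -mulNr -mulrDl; apply: divr_ge0; last lra.
      move: hP => /= hP; nra.
    lra.
  have -> : \sum_(t : B.-tuple V) run_prob x t * expR (l * a0 / M + - (l * F [set:: t]) / M)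
      = expR (l * a0 / M) * EV x [::] B (fun s => expR (- (l * F [set:: s]) / M)).
    rewrite /EV big_distrr; apply: eq_bigr => t _.
    by rewrite expRD mulrCA.
  have K := @key R V x F M O l B hx hs hr hm M0 B0 l0 B [::] (erefl _).
  have [lb0 [lbl lbe]] := @lamk_bnd R l B B l0 B0.
  set lb := lamk l B B in K lb0 lbl lbe.
  apply: le_trans; first exact: (ler_wpM2l (expR_ge0 _) K).
  rewrite -expRD ler_expR.
  have Bp : 0 < (B%:R : R) by rewrite ltr0n.
  have e1 : (B%:R / ((1 + l) * B%:R)) = 1 / (1 + l) by field; apply/andP; split; rewrite gt_eqF //; lra.
  rewrite e1 in lbe.
  have e2 : 1 - l <= 1 / (1 + l) by rewrite ler_pdivlMr; nra.
  have e3 : expR (- (1 / (1 + l))) <= expR (l - 1) by rewrite ler_expR; lra.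
  have e4 : lb <= l * expR (l - 1).
    by apply: le_trans lbe _; apply: ler_wpM2l.
  have f0 : 0 <= F [set:: [::]] := hF0 _.
  have q1 : 0 <= lb * F [set:: [::]] / M by apply: divr_ge0; [apply: mulr_ge0 | lra].
  have q2 : (l - l * expR (l - 1)) * O / M <= (l - lb) * O / M.
    rewrite ler_pM2r ?invr_gt0 // ler_wpM2r //; lra.
  rewrite mulNr.
  lra.
have eE : 0 <= expR (-1) := expR_ge0 _.
case: (lerP eps 2) => he.
  have l0 : 0 <= eps / 2 by lra.
  have l1 : eps / 2 <= 1 by lra.
  apply: le_trans; first exact: (cher _ l0 l1).
  rewrite ler_expR.
  have fn := @final_num R _ l0 l1.
  set E := expR (eps / 2 - 1) in fn *.
  have -> : eps / 2 * a0 / M - (eps / 2 - eps / 2 * E) * O / M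
       = (eps / 2 * (E - expR (-1) - eps)) * (O / M) by rewrite /a0; field.
  have -> : - (eps ^+ 2 * O) / (4 * M) = (- (eps ^+ 2) / 4) * (O / M) by field.
  apply: ler_wpM2r; first by apply: divr_ge0; lra.
  rewrite expr2. nra.
have [Oz | Op] := eqVneq O 0.
  apply: le_trans; first exact: (cher 0 (lexx _) ler01).
  by rewrite /a0 Oz !(mul0r, mulr0, subr0, oppr0, sub0r).
have Op' : 0 < O by rewrite lt0r Op.
have -> : Pr_out B x (fun S => F S <= a0) = 0.
  rewrite /Pr_out big1 // => t hP; exfalso.
  have hz : 0 <= F [set:: t] := hF0 [set:: t].
  move: hP => /= hP.
  have : a0 < 0.
    have n : 1 - expR (-1) - eps < 0 by have := @expR_ge0 R (-1); lra.
    by rewrite /a0; apply: (@le_lt_trans _ _ ((1 - expR (-1) - eps) * O)) => //; rewrite pmulr_llt0.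
  lra.
exact: expR_ge0.
Qed.
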